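(* Let $\{A_i\}_{i\in I}$ be a family of Banach lattice algebras, $1\le p\le\infty$, and let $\ell_p(A_i)$ be their $\ell_p$-sum with coordinatewise order and product. Then \[BP(\ell_p(A_i))=\prod_{i\in I}BP(A_i),\quad BP_l(\ell_p(A_i))=\prod_{i\in I}BP_l(A_i),\quad BP_r(\ell_p(A_i))=\prod_{i\in I}BP_r(A_i)\] (intersected with $\ell_p(A_i)$, i.e. an element $(p_i)\in\ell_p(A_i)$ lies in the left-hand set iff each $p_i$ lies in the corresponding set for $A_i$). If each $A_i$ has an identity, then $OI(\ell_\infty(A_i))=\prod_{i\in I}OI(A_i)$.
   Context: A Banach lattice algebra is a real Banach lattice $A$ with an associative bilinear product making it a Banach algebra such that $xy\ge0$ whenever $x,y\ge0$; identity $e$ means a multiplicative identity with $\|e\|=1$. $L_a(x)=ax$, $R_a(x)=xa$. A band projection on a Banach lattice $X$ is an operator $P$ with $P^2=P$, $0\le P\le I_X$. $BP(A)=\{a\in A_+: L_aR_a\text{ is a band projection}\}$, $BP_l(A)=\{a\in A_+: L_a\text{ is a band projection}\}$, $BP_r(A)=\{a\in A_+: R_a\text{ is a band projection}\}$, $OI(A)=\{p: p^2=p,\ 0\le p\le e\}$. The $\ell_p$-sum $\ell_p(A_i)$ consists of families $(x_i)$ with $(\|x_i\|)\in\ell_p(I)$, normed by $\|(\|x_i\|)\|_p$; it is a Banach lattice algebra. *)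

(* Defs.v *)
From HB Require Import structures.
From mathcomp Require Import all_boot all_order all_algebra.
From mathcomp Require Import all_classical all_reals all_analysis.
Set Implicit Arguments. Unset Strict Implicit. Unset Printing Implicit Defensive.
Import Order.TTheory GRing.Theory Num.Theory.
Import numFieldNormedType.Exports.
Local Open Scope ring_scope.

Record BanachLatticeAlgebra (R : realType) := BLA {
  bla_V :> completeNormedModType R;
  bla_le : bla_V -> bla_V -> Prop;
  bla_join : bla_V -> bla_V -> bla_V;
  bla_mul : bla_V -> bla_V -> bla_V;
  bla_le_refl : forall x, bla_le x x;
  bla_le_trans : forall x y z, bla_le x y -> bla_le y z -> bla_le x z;
  bla_le_anti : forall x y, bla_le x y -> bla_le y x -> x = y;
  bla_le_add : forall x y z, bla_le x y -> bla_le (x + z) (y + z);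
  bla_le_scale : forall (c : R) x y, 0 <= c -> bla_le x y -> bla_le (c *: x) (c *: y);
  bla_join_l : forall x y, bla_le x (bla_join x y);
  bla_join_r : forall x y, bla_le y (bla_join x y);
  bla_join_lub : forall x y z, bla_le x z -> bla_le y z -> bla_le (bla_join x y) z;
  (* lattice norm: |x| <= |y| implies ||x|| <= ||y||, with |x| = x v (-x) *)
  bla_norm_mono : forall x y, bla_le (bla_join x (- x)) (bla_join y (- y)) ->
                    `|x| <= `|y|;
  bla_mulDl : forall x y z, bla_mul (x + y) z = bla_mul x z + bla_mul y z;
  bla_mulDr : forall x y z, bla_mul x (y + z) = bla_mul x y + bla_mul x z;
  bla_mulZl : forall (c : R) x y, bla_mul (c *: x) y = c *: bla_mul x y;
  bla_mulZr : forall (c : R) x y, bla_mul x (c *: y) = c *: bla_mul x y;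
  bla_mulA : forall x y z, bla_mul x (bla_mul y z) = bla_mul (bla_mul x y) z;
  bla_mul_norm : forall x y, `|bla_mul x y| <= `|x| * `|y|;
  bla_mul_pos : forall x y, bla_le 0 x -> bla_le 0 y -> bla_le 0 (bla_mul x y)
}.

Definition is_identity (R : realType) (A : BanachLatticeAlgebra R) (e : A) :=
  (forall x : A, bla_mul e x = x /\ bla_mul x e = x) /\ `|e| = 1.

(* The operations of an ordered algebra, used to define BP, BP_l, BP_r, OI
   uniformly, relative to a carrier subset S of an ambient type T. *)
Record ola_ops (R : realType) (T : Type) := OlaOps {
  o_zero : T;
  o_add : T -> T -> T;
  o_scale : R -> T -> T;
  o_le : T -> T -> Prop;
  o_mul : T -> T -> T
}.

Definition band_proj_on (R : realType) (T : Type) (o : ola_ops R T)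
    (S : T -> Prop) (P : T -> T) : Prop :=
  (forall x, S x -> S (P x)) /\
  (forall x y, S x -> S y -> P (o_add o x y) = o_add o (P x) (P y)) /\
  (forall (c : R) x, S x -> P (o_scale o c x) = o_scale o c (P x)) /\
  (forall x, S x -> P (P x) = P x) /\
  (forall x, S x -> o_le o (o_zero o) x ->
     o_le o (o_zero o) (P x) /\ o_le o (P x) x).

Definition BP_on (R : realType) (T : Type) (o : ola_ops R T) (S : T -> Prop) (a : T) :=
  S a /\ o_le o (o_zero o) a /\
  band_proj_on o S (fun x => o_mul o a (o_mul o x a)).
Definition BPl_on (R : realType) (T : Type) (o : ola_ops R T) (S : T -> Prop) (a : T) :=
  S a /\ o_le o (o_zero o) a /\ band_proj_on o S (fun x => o_mul o a x).
Definition BPr_on (R : realType) (T : Type) (o : ola_ops R T) (S : T -> Prop) (a : T) :=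
  S a /\ o_le o (o_zero o) a /\ band_proj_on o S (fun x => o_mul o x a).
Definition OI_on (R : realType) (T : Type) (o : ola_ops R T) (S : T -> Prop) (e p : T) :=
  S p /\ o_mul o p p = p /\ o_le o (o_zero o) p /\ o_le o p e.

Definition bla_ops (R : realType) (A : BanachLatticeAlgebra R) : ola_ops R A :=
  OlaOps 0 (fun x y => x + y) (fun c x => c *: x) (@bla_le R A) (@bla_mul R A).

Definition BP (R : realType) (A : BanachLatticeAlgebra R) (a : A) :=
  BP_on (bla_ops A) (fun _ => True) a.
Definition BPl (R : realType) (A : BanachLatticeAlgebra R) (a : A) :=
  BPl_on (bla_ops A) (fun _ => True) a.
Definition BPr (R : realType) (A : BanachLatticeAlgebra R) (a : A) :=
  BPr_on (bla_ops A) (fun _ => True) a.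
Definition OI (R : realType) (A : BanachLatticeAlgebra R) (e p : A) :=
  OI_on (bla_ops A) (fun _ => True) e p.

(* (f_i) in l_p(I), 1 <= p <= oo, for a nonnegative family f. *)
Definition lp_mem (R : realType) (I : choiceType) (p : \bar R) (f : I -> R) : Prop :=
  match p with
  | +oo%E => exists M : R, forall i, f i <= M
  | (r%:E)%E => exists M : R, forall s : seq I, uniq s ->
                  \sum_(i <- s) (f i `^ r) <= M
  | -oo%E => False
  end.

(* The l_p-sum l_p(A_i), as the subset of the product with coordinatewise
   operations, order and product. *)
Definition lp_sum (R : realType) (I : choiceType) (A : I -> BanachLatticeAlgebra R)
    (p : \bar R) (x : forall i, A i) : Prop :=
  lp_mem p (fun i => `|x i|).

Definition prod_ops (R : realType) (I : choiceType) (A : I -> BanachLatticeAlgebra R)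
  : ola_ops R (forall i, A i) :=
  OlaOps (fun i => 0) (fun x y i => x i + y i) (fun c x i => c *: x i)
    (fun x y => forall i, bla_le (x i) (y i)) (fun x y i => bla_mul (x i) (y i)).

Arguments lp_sum {R I} A p x.
Arguments prod_ops {R I} A.

(* Main.v *)
Require Import Defs.
From HB Require Import structures.
From mathcomp Require Import all_boot all_order all_algebra.
From mathcomp Require Import all_classical all_reals all_analysis.
From mathcomp Require Import lra.
Import Order.TTheory GRing.Theory Num.Theory.
Local Open Scope ring_scope.

Section LP.
Variables (R : realType) (I : choiceType).

Lemma lp_single (p : \bar R) (hp : (1 <= p)%E) (f : I -> R) i :
  (forall j, j != i -> f j = 0) -> 0 <= f i -> lp_mem p f.
Proof.
move=> f0 fi0; case: p hp => [r| |] //= hp.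
- have r1 : 1 <= r by rewrite -lee_fin.
  exists (f i `^ r) => s us.
  have Hz : forall j, j != i -> f j `^ r = 0.
    by move=> j /f0 ->; rewrite powR0 // gt_eqF // (lt_le_trans ltr01 r1).
  case: (boolP (i \in s)) => [ins|nins].
  + rewrite (bigD1_seq i) //= big1 ?addr0 // => j; exact: Hz.
  + rewrite big_seq_cond big1 ?powR_ge0 // => j /andP[js _]; apply: Hz.
    by apply: contraNneq nins => <-.
- exists (f i) => j; case: (eqVneq j i) => [->//|/f0 ->//].
Qed.

Lemma lp_bdd (p : \bar R) (hp : (1 <= p)%E) (g : I -> R) :
  (forall i, 0 <= g i) -> lp_mem p g -> exists K, 0 <= K /\ forall i, g i <= K.
Proof.
move=> g0; case: p hp => [r| |] //= hp.
- have r1 : 1 <= r by rewrite -lee_fin.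
  move=> [M HM]; exists (Num.max 1 M); split; first by rewrite le_max ler01.
  move=> i; case: (leP (g i) 1) => [gi1|gi1]; first by rewrite le_max gi1.
  rewrite le_max; apply/orP; right.
  apply: le_trans (le1r_powR (ltW gi1) r1) _.
  by have := HM [:: i] isT; rewrite big_seq1.
- move=> [M HM]; exists (Num.max 0 M); split; first by rewrite le_max lexx.
  by move=> i; rewrite le_max HM orbT.
Qed.

Lemma lp_dom (p : \bar R) (hp : (1 <= p)%E) (f g : I -> R) C : 0 <= C ->
  (forall i, 0 <= f i /\ f i <= C * g i) -> (forall i, 0 <= g i) ->
  lp_mem p g -> lp_mem p f.
Proof.
move=> C0 fg g0; case: p hp => [r| |] //= hp.
- have r1 : 1 <= r by rewrite -lee_fin.
  have r0 : 0 <= r by apply: le_trans r1.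
  move=> [M HM]; exists (C `^ r * M) => s us.
  apply: le_trans (_ : \sum_(i <- s) C `^ r * g i `^ r <= _).
    apply: ler_sum => i _; rewrite -powRM //.
    apply: ge0_ler_powR => //; rewrite ?nnegrE ?(fg i).1 ?mulr_ge0 //.
    exact: (fg i).2.
  by rewrite -mulr_sumr ler_wpM2l ?powR_ge0 ?HM.
- move=> [M HM]; exists (C * M) => i.
  by apply: le_trans (fg i).2 _; rewrite ler_wpM2l.
Qed.
End LP.

Section Main.
Variables (R : realType) (I : choiceType) (A : I -> BanachLatticeAlgebra R).

Definition liftf {i : I} (z : A i) : forall j, A j := @eqtype.dfwith I A (fun j => 0) i z.

Lemma lift_lp p (hp : (1 <= p)%E) i (z : A i) : lp_sum A p (liftf z).
Proof.
apply: (@lp_single _ _ p hp _ i); last by rewrite normr_ge0.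
move=> j ji /=; rewrite /liftf; case: (eqVneq i j) => [ij|ij]; first by rewrite ij eqxx in ji.
by rewrite dfwith_out // normr0.
Qed.

Lemma bp_prod p (hp : (1 <= p)%E) (Q : forall i, A i -> A i) C : 0 <= C ->
  (forall i z, `|Q i z| <= C * `|z|) ->
  band_proj_on (prod_ops A) (lp_sum A p) (fun x i => Q i (x i)) <->
  forall i, band_proj_on (bla_ops (A i)) (fun _ => True) (Q i).
Proof.
move=> C0 HQ; split.
- move=> [H1 [H2 [H3 [H4 H5]]]] i.
  have L := fun z : A i => @lift_lp p hp i z.
  split; first by [].
  split.
    move=> z1 z2 _ _; have := f_equal (fun f => f i) (H2 _ _ (L z1) (L z2)).
    by rewrite /= /liftf !dfwith_in.
  split.
    move=> c z _; have := f_equal (fun f => f i) (H3 c _ (L z)).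
    by rewrite /= /liftf !dfwith_in.
  split.
    move=> z _; have := f_equal (fun f => f i) (H4 _ (L z)).
    by rewrite /= /liftf !dfwith_in.
  move=> z _ /= z0.
  have Lz0 : forall j, bla_le 0 (liftf z j).
    move=> j; rewrite /liftf; case: (eqVneq i j) => [<-|ij]; first by rewrite dfwith_in.
    rewrite dfwith_out //; exact: bla_le_refl.
  have [Ha Hb] := H5 _ (L z) Lz0.
  by move: (Ha i) (Hb i); rewrite /liftf !dfwith_in.
- move=> H.
  split.
    move=> x hx; apply: (@lp_dom _ _ p hp _ _ C C0 _ _ hx) => [i|i].
      by rewrite normr_ge0 HQ.
    exact: normr_ge0.
  split.
    move=> x y _ _; apply: functional_extensionality_dep => i /=.
    by case: (H i) => _ [H2 _]; apply: H2.
  split.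
    move=> c x _; apply: functional_extensionality_dep => i /=.
    by case: (H i) => _ [_ [H3 _]]; apply: H3.
  split.
    move=> x _; apply: functional_extensionality_dep => i /=.
    by case: (H i) => _ [_ [_ [H4 _]]]; apply: H4.
  move=> x _ /= x0; split => i; by case: (H i) => _ [_ [_ [_ H5]]]; case: (H5 _ Logic.I (x0 i)).
Qed.

Lemma norm_le_pos (B : BanachLatticeAlgebra R) (q e : B) :
  bla_le 0 q -> bla_le q e -> `|q| <= `|e|.
Proof.
move=> q0 qe; apply: bla_norm_mono; apply: bla_join_lub.
  exact: bla_le_trans qe (bla_join_l _ _).
apply: (@bla_le_trans _ _ _ 0); last first.
  exact: bla_le_trans q0 (bla_le_trans qe (bla_join_l _ _)).
have := bla_le_add (- q) q0; by rewrite add0r subrr.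
Qed.

End Main.

Theorem mainTheorem19 (R : realType) (I : choiceType)
    (A : I -> BanachLatticeAlgebra R) (p : \bar R) (hp : (1 <= p)%E) :
  (forall x : forall i, A i, lp_sum A p x ->
     (BP_on (prod_ops A) (lp_sum A p) x <-> forall i, BP (x i)) /\
     (BPl_on (prod_ops A) (lp_sum A p) x <-> forall i, BPl (x i)) /\
     (BPr_on (prod_ops A) (lp_sum A p) x <-> forall i, BPr (x i))) /\
  (forall e : forall i, A i, (forall i, is_identity (e i)) ->
     forall q : forall i, A i,
       OI_on (prod_ops A) (lp_sum A +oo%E) e q <-> forall i, OI (e i) (q i)).
Proof.
split.
- move=> x hx.
  have [K [K0 HK]] := @lp_bdd R I p hp _ (fun i => normr_ge0 (x i)) hx.
  have HQ : forall i (z : A i), `|bla_mul (x i) (bla_mul z (x i))| <= (K * K) * `|z|.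
    move=> i z; apply: le_trans (bla_mul_norm _ _) _.
    apply: le_trans (ler_wpM2l (normr_ge0 _) (bla_mul_norm _ _)) _.
    rewrite mulrCA [_ * `|z|]mulrC ler_wpM2l //.
    by apply: ler_pM => //; apply: HK.
  have HL : forall i (z : A i), `|bla_mul (x i) z| <= K * `|z|.
    move=> i z; apply: le_trans (bla_mul_norm _ _) _.
    by rewrite ler_wpM2r // HK.
  have HR : forall i (z : A i), `|bla_mul z (x i)| <= K * `|z|.
    move=> i z; apply: le_trans (bla_mul_norm _ _) _.
    by rewrite [K * _]mulrC ler_wpM2l // HK.
  have KK : 0 <= K * K by rewrite mulr_ge0.
  split; last split.
  + split.
    * move=> [_ [x0 Hb]] i; split=> //; split; first exact: x0 i.
      move: i; exact: (@bp_prod R I A p hp _ _ KK HQ).1 Hb.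
    * move=> H; split=> //; split; first by move=> i; case: (H i) => _ [].
      apply: (@bp_prod R I A p hp _ _ KK HQ).2 => i; by case: (H i) => _ [].
  + split.
    * move=> [_ [x0 Hb]] i; split=> //; split; first exact: x0 i.
      move: i; exact: (@bp_prod R I A p hp (fun i z => bla_mul (x i) z) _ K0 HL).1 Hb.
    * move=> H; split=> //; split; first by move=> i; case: (H i) => _ [].
      apply: (@bp_prod R I A p hp (fun i z => bla_mul (x i) z) _ K0 HL).2 => i; by case: (H i) => _ [].
  + split.
    * move=> [_ [x0 Hb]] i; split=> //; split; first exact: x0 i.
      move: i; exact: (@bp_prod R I A p hp (fun i z => bla_mul z (x i)) _ K0 HR).1 Hb.
    * move=> H; split=> //; split; first by move=> i; case: (H i) => _ [].
      apply: (@bp_prod R I A p hp (fun i z => bla_mul z (x i)) _ K0 HR).2 => i; by case: (H i) => _ [].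
- move=> e he q; split.
  + move=> [_ [qq [q0 qe]]] i; split=> //; split.
      exact: (f_equal (fun f => f i) qq).
    by split; [exact: q0 i | exact: qe i].
  + move=> H; split.
      exists 1 => i /=; case: (H i) => _ [_ [q0 qe]].
      by rewrite -(he i).2; exact: norm_le_pos.
    split.
      apply: functional_extensionality_dep => i /=; by case: (H i) => _ [].
    by split => i /=; case: (H i) => _ [_ []].
Qed.
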